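(* Let $F_n$ be a probability distribution function on $\mathbb{R}$, $X\sim F_n$, with $\varepsilon_n:=F_n(0)>0$, $\mathbb{E}_{F_n}[X]\ge\mu>0$, $\mathbb{E}_{F_n}[X^2]\le C$ and $\mathbb{E}_{F_n}[X^2\mid X\le0]\le K$. Let $G_n(y)=\int_{-\infty}^{y}(x^2-yx)\,dF_n(x)$, let $y_n^*\ge0$ satisfy $G_n(y_n^* )=0$, let $D=C/\mu$, and let $$R_n=\mathbb{E}_{F_n}[X^2;\,X\le0]+y_n^*\,\mathbb{E}_{F_n}[|X|;\,X\le0].$$ Then $R_n\le(K+D\sqrt K)\,\varepsilon_n$.
   Context: $\mathbb{E}_{F_n}[Y;\,A]$ denotes $\mathbb{E}_{F_n}[Y\mathbf{1}_A]$. *)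

(* Defs.v *)
From HB Require Import structures.
From mathcomp Require Import all_boot all_order all_algebra.
From mathcomp Require Import all_classical all_reals all_analysis.
Set Implicit Arguments. Unset Strict Implicit. Unset Printing Implicit Defensive.
Import Order.TTheory GRing.Theory Num.Theory.
Local Open Scope classical_set_scope.
Local Open Scope ring_scope.
Local Open Scope ereal_scope.

(* The distribution F_n is represented by its law: a probability measure F on
   the Borel sets of R; F_n(y) = F `]-oo, y]`. *)

Definition Eon (R : realType) (F : probability R R) (A : set R) (f : R -> R)
  : \bar R := \int[F]_(x in A) (f x)%:E.

Definition Econd (R : realType) (F : probability R R) (A : set R) (f : R -> R)
  : \bar R := Eon F A f * ((fine (F A))^-1)%:E.

Definition Gfun (R : realType) (F : probability R R) (y : R) : \bar R :=
  Eon F `]-oo, y] (fun x => (x ^+ 2 - y * x)%R).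

(* Main.v *)
Require Import Defs.
From HB Require Import structures.
From mathcomp Require Import all_boot all_order all_algebra.
From mathcomp Require Import all_classical all_reals all_analysis.
From mathcomp Require Import measurable_realfun.
From mathcomp Require Import lra.
Import Order.TTheory GRing.Theory Num.Theory.
Local Open Scope classical_set_scope.
Local Open Scope ring_scope.

Lemma mEF (R : realType) (D : set R) (g : R -> R) :
  measurable_fun D g -> measurable_fun D (EFin \o g).
Proof. by move=> h; apply/measurable_EFinP. Qed.

Lemma absle (R : realType) (x : R) : `|x| <= x ^+ 2 + 1.
Proof.
rewrite -real_normK ?num_real; have := normr_ge0 x; set u := `|x|; move=> u0; nra.
Qed.


Lemma final_alg (R: realType) (a b e y mu C K : R): 0 < e -> 0 < mu -> 0 <= y ->
  0 <= a -> 0 <= b -> y * mu <= C -> a <= K * e ->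
  (forall t, 0 < t -> t * b <= a + t ^+ 2 / 4 * e) ->
  a + y * b <= (K + C / mu * Num.sqrt K) * e.
Proof.
move=> e0 mu0 y0 a0 b0 ymu aK ht.
have K0 : 0 <= K by nra.
have sK := sqr_sqrtr K0.
have s0 : 0 <= Num.sqrt K := sqrtr_ge0 K.
set s := Num.sqrt K in sK s0 *.
have hb : b <= s * e.
  have [sp|] := ltP 0 s.
    have := ht (2 * s); rewrite mulr_gt0 // => /(_ isT).
    rewrite -sK in aK; move=> h; nra.
  move=> sl; have s00 : s = 0 by apply/eqP; rewrite eq_le sl s0.
  rewrite s00 mul0r; rewrite s00 expr2 mul0r in sK.
  rewrite -sK mul0r in aK.
  have [bp|//] := ltP 0 b.
  set t := 2 * b / e.
  have te : t * e = 2 * b by rewrite /t mulfVK // gt_eqF.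
  have tp : 0 < t by rewrite /t divr_gt0 // mulr_gt0.
  have := ht t tp; nra.
have yD : y <= C / mu by rewrite ler_pdivlMr.
have D0 : 0 <= C / mu by apply: le_trans yD.
set D := C / mu in yD D0 *.
nra.
Qed.

Lemma tabs (R : realType) (t x : R) : 0 < t -> t * `|x| <= x ^+ 2 + t ^+ 2 / 4.
Proof.
move=> t0; rewrite -[x ^+ 2](real_normK (num_real x)); have := normr_ge0 x; set u := `|x|.
move=> u0; have := sqr_ge0 (u - t / 2); nra.
Qed.

Lemma yxle (R : realType) (y x : R) : 0 <= y -> y < x -> y * x <= x ^+ 2.
Proof. move=> *; nra. Qed.

Theorem lemma8 (R : realType) (F : probability R R) (mu C K ystar : R) :
  (0 < F [set` `]-oo, 0%R]])%E ->
  0 < mu ->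
  (mu%:E <= \int[F]_x x%:E)%E ->
  (\int[F]_x (x ^+ 2)%:E <= C%:E)%E ->
  (Econd F [set` `]-oo, 0%R]] (fun x => (x ^+ 2)%R) <= K%:E)%E ->
  0 <= ystar ->
  Gfun F ystar = 0%E ->
  (Eon F [set` `]-oo, 0%R]] (fun x => (x ^+ 2)%R) + ystar%:E * Eon F [set` `]-oo, 0%R]] (fun x => `|x|%R)
    <= ((K + C / mu * Num.sqrt K) * fine (F [set` `]-oo, 0%R]]))%:E)%E.
Proof.
move=> Fpos mu0 hmu hC hK y0 hG.
set A := [set` `]-oo, 0%R]].
have mA : measurable A by exact: measurable_itv.
have m2 : measurable_fun setT (fun x : R => (x ^+ 2)%:E).
  by apply/measurable_EFinP; exact: (measurable_funX 2 (@measurable_id _ R setT)).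
have m1 : measurable_fun setT (fun x : R => x%:E).
  by apply/measurable_EFinP; exact: (@measurable_id _ R setT).
have i2 : F.-integrable setT (fun x : R => (x ^+ 2)%:E).
  apply/integrableP; split => //.
  under eq_integral do rewrite gee0_abs ?lee_fin ?sqr_ge0//.
  by apply: (le_lt_trans hC); rewrite ltry.
have ic : forall k : R, F.-integrable setT (fun x : R => k%:E).
  move=> k; apply: (@finite_measure_integrable_cst _ _ _ F setT k).
  exact: measurableT.
have i1 : F.-integrable setT (fun x : R => x%:E).
  apply: (le_integrable measurableT m1 _ (integrableD measurableT i2 (ic 1))) => x _ /=.
  rewrite lee_fin [X in _ <= X]ger0_norm ?addr_ge0 ?sqr_ge0//.
  exact: absle.
set B := [set` `]-oo, ystar]].
have mB : measurable B by exact: measurable_itv.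
have iG : F.-integrable setT (fun x : R => (x ^+ 2 - ystar * x)%:E).
  apply: (eq_integrable measurableT _ _ _ (integrableD measurableT i2 (integrableZl measurableT (- ystar) i1))).
  by move=> x _ /=; rewrite -EFinM -EFinD mulNr.
have iGB : F.-integrable setT ((fun x : R => (x ^+ 2 - ystar * x)%:E) \_ B).
  apply/(integrable_mkcond _ mB).
  exact: (integrableS measurableT mB (@subsetT _ B) iG).
have hG' : (\int[F]_x (((fun x : R => (x ^+ 2 - ystar * x)%:E) \_ B) x) = 0)%E.
  by rewrite -integral_mkcond.
have iY : F.-integrable setT (fun x : R => (ystar%:E * x%:E)%E).
  exact: integrableZl.
have key : (\int[F]_x (ystar%:E * x%:E + ((fun x : R => (x ^+ 2 - ystar * x)%:E) \_ B) x)
     <= \int[F]_x (x ^+ 2)%:E)%E.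
  apply: le_integral => //.
    exact: (integrableD measurableT iY iGB).
  move=> x _; rewrite patchE; case: ifP => xB.
    by rewrite -EFinM -EFinD lee_fin addrC subrK.
  rewrite adde0 -EFinM lee_fin; apply: yxle => //.
  move/negbT: xB; rewrite /B notin_setE /= in_itv /= => /negP; rewrite -ltNge; exact.
rewrite (integralD measurableT iY iGB) hG' adde0 integralZl // in key.
have fE := integrable_fin_num measurableT i1.
rewrite -(fineK fE) in key hmu.
set e := fine _ in key hmu.
have key2 := le_trans key hC.
rewrite -EFinM lee_fin in key2; rewrite lee_fin in hmu.
have ymu : ystar * mu <= C.
  by apply: le_trans key2; exact: ler_wpM2l.
have iA2 : F.-integrable A (fun x : R => (x ^+ 2)%:E).
  exact: (integrableS measurableT mA (@subsetT _ A) i2).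
have iA1 : F.-integrable A (fun x : R => x%:E).
  exact: (integrableS measurableT mA (@subsetT _ A) i1).
have mabs : measurable_fun A (fun x : R => `|x|%:E).
  by apply/measurable_EFinP; exact: normr_measurable.
have iAabs : F.-integrable A (fun x : R => `|x|%:E).
  apply: (le_integrable mA mabs _ iA1) => x _ /=.
  by rewrite ?abse_EFin ?normr_id.
have iAc : forall k : R, F.-integrable A (fun x : R => k%:E).
  move=> k; exact: (@finite_measure_integrable_cst _ _ _ F A k mA).
have faE : Eon F A (fun x => (x ^+ 2)%R) \is a fin_num.
  rewrite /Eon. apply: integrable_fin_num. exact: mA. exact: iA2.
have fbE : Eon F A (fun x => `|x|%R) \is a fin_num.
  rewrite /Eon; apply: integrable_fin_num; [exact: mA | exact: iAabs].
have feE : F A \is a fin_num by exact: fin_num_measure.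
have a0 : (0 <= Eon F A (fun x => (x ^+ 2)%R))%E.
  by rewrite /Eon; apply: integral_ge0 => x _; rewrite lee_fin sqr_ge0.
have b0 : (0 <= Eon F A (fun x => `|x|%R))%E.
  by rewrite /Eon; apply: integral_ge0 => x _; rewrite lee_fin normr_ge0.
have hT : forall t : R, 0 < t ->
   (t%:E * Eon F A (fun x => `|x|%R) <= Eon F A (fun x => (x ^+ 2)%R) + (t ^+ 2 / 4)%:E * F A)%E.
  move=> t t0; rewrite /Eon -integralZl //.
  rewrite -(integral_cst F mA) -integralD //.
  apply: le_integral => //.
  - exact: integrableZl.
  - exact: (integrableD mA iA2 (iAc (t ^+ 2 / 4))).
  - by move=> x _; rewrite -EFinM -EFinD lee_fin; exact: tabs.
  exact: (iAc (t ^+ 2 / 4)).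
move: Fpos hK a0 b0 hT.
rewrite /Econd -(fineK faE) -(fineK fbE) -(fineK feE) /=.
set a := fine (Eon _ _ _); set b := fine (Eon _ _ _); set ep := fine (F A).
rewrite !lte_fin !lee_fin => e0 hK a0 b0 hT.
rewrite ler_pdivrMr // in hK.
apply: final_alg => // t t0.
Qed.
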